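(* Let $\mathbb F\subseteq\mathbb D$ be finite and $n:=\mathrm{lh}(\mathbb F)$. Then there exist $m\in\mathbb N$ and a finite sequence $\mathbb F=:\mathbb F_0,\mathbb F_1,\dots,\mathbb F_N$ with $\mathbb F_l=\Phi_{h_l}^{(i_l)}(\mathbb F_{l-1})$ for some $\mathbb F_{l-1}$-admissible index $(h_l,i_l)\in\mathbb F_{l-1}$ ($l=1,\dots,N$), such that $\mathbb F_N\subseteq\mathbb D_{m+1}^{m+n}$.
   Context: Dyadic intervals: $\Delta_k^{(j)}:=[\frac{j-1}{2^k},\frac{j}{2^k})$ for $k\ge0$. Dyadic tree $\mathbb D:=\{(k,j):k\ge1;\ j=1,\dots,2^{k-1}\}$; $\mathbb D_m^n:=\{(k,j):k=m,\dots,n;\ j=1,\dots,2^{k-1}\}$. Branches: $\mathbb B(t):=\{(k,j)\in\mathbb D:t\in\Delta_{k-1}^{(j)}\}$; local height $\mathrm{lh}(\mathbb F):=\max_{t\in[0,1)}|\mathbb F\cap\mathbb B(t)|$. An index $(h,i)\in\mathbb F$ is $\mathbb F$-admissible if neither $(h+1,2i-1)$ nor $(h+1,2i)$ belongs to $\mathbb F$. Fork: $\mathbb F_h^{(i)}:=\{(h,i),(h+1,2i-1),(h+1,2i)\}$. For $(k,j)\in\mathbb D$ define $j^\ast$: $j^\ast=j+2^{k-h-2}$ if $\Delta_{k-1}^{(j)}\subseteq\Delta_{h+1}^{(4i-2)}$; $j^\ast=j-2^{k-h-2}$ if $\Delta_{k-1}^{(j)}\subseteq\Delta_{h+1}^{(4i-1)}$;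 $j^\ast=j$ otherwise. Then $\Phi_h^{(i)}(\mathbb F):=\{(h+1,2i-1),(h+1,2i)\}\cup\{(k,j^\ast):(k,j)\in\mathbb F\setminus\mathbb F_h^{(i)}\}$. *)

(* Defs.v *)
From HB Require Import structures.
From mathcomp Require Import all_boot all_order all_algebra.
From mathcomp Require Import finmap.
From mathcomp Require Import reals.
Set Implicit Arguments. Unset Strict Implicit. Unset Printing Implicit Defensive.
Import Order.TTheory GRing.Theory Num.Theory.
Delimit Scope ring_scope with R.

Local Open Scope fset_scope.

Definition idx := (nat * nat)%type.

Definition inD (p : idx) : bool := (1 <= p.1)%N && (1 <= p.2 <= 2 ^ p.1.-1)%N.

Definition inDmn (m n : nat) (p : idx) : bool :=
  (m <= p.1 <= n)%N && (1 <= p.2 <= 2 ^ p.1.-1)%N.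

Definition inDelta (R : realType) (k j : nat) (t : R) : bool :=
  (((j%:R - 1) / 2 ^+ k <= t) && (t < j%:R / 2 ^+ k))%R.

Definition inBranch (R : realType) (t : R) (p : idx) : bool :=
  inD p && inDelta p.1.-1 p.2 t.

Definition branch_count (R : realType) (F : {fset idx}) (t : R) : nat :=
  #|` [fset p in F | inBranch t p] |.

Definition is_lh (R : realType) (F : {fset idx}) (n : nat) : Prop :=
  (exists2 t : R, (0 <= t < 1)%R & branch_count F t = n) /\
  (forall t : R, (0 <= t < 1)%R -> (branch_count F t <= n)%N).

Definition admissible (F : {fset idx}) (h i : nat) : bool :=
  [&& (h, i) \in F, (h.+1, (2 * i).-1) \notin F & (h.+1, 2 * i) \notin F].

Definition fork (h i : nat) : {fset idx} :=
  [fset (h, i); (h.+1, (2 * i).-1); (h.+1, 2 * i)].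

(* For j, j' >= 1:  Delta_k^{(j)} \subseteq Delta_{k'}^{(j')}  iff
   k' <= k and the (j-1)-th dyadic interval of level k lies in the
   (j'-1)-th one of level k', i.e. (j-1) / 2^(k-k') = j'-1. *)
Definition dsub (k j k' j' : nat) : bool :=
  (k' <= k)%N && ((j.-1 %/ 2 ^ (k - k'))%N == j'.-1).

Definition jstar (h i k j : nat) : nat :=
  if dsub k.-1 j h.+1 (4 * i - 2) then (j + 2 ^ (k - h - 2))%N
  else if dsub k.-1 j h.+1 (4 * i - 1) then (j - 2 ^ (k - h - 2))%N
  else j.

Definition Phi (h i : nat) (F : {fset idx}) : {fset idx} :=
  [fset (h.+1, (2 * i).-1); (h.+1, 2 * i)] `|`
  [fset (p.1, jstar h i p.1 p.2) | p in F `\` fork h i].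

(* Main.v *)
Require Import Defs.
From HB Require Import structures.
From mathcomp Require Import all_boot all_order all_algebra.
From mathcomp Require Import finmap.
From mathcomp Require Import reals.
From mathcomp Require Import zify.
From Stdlib Require Import Classical.
Set Warnings "-notation-overridden".
Import Order.TTheory GRing.Theory Num.Theory.

Section SA.

Definition cont (E : nat) (p : idx) (x : nat) : bool :=
  (p.1 <= E)%N && (x %/ 2 ^ (E - p.1) == p.2.-1)%N.

Definition sgm (E h i x : nat) : nat :=
  let s := (2 ^ (E - h.+2))%N in
  if x %/ s == 4 * i - 3 then x + s
  else if x %/ s == 4 * i - 2 then x - s else x.

Lemma expn_gt0' n : 0 < 2 ^ n. Proof. by rewrite expn_gt0. Qed.

Lemma sig_cont E h i k j x :
  1 <= i -> h.+2 <= E -> 1 <= j -> k <= E ->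
  (k, j) != (h.+1, (2 * i).-1) -> (k, j) != (h.+1, 2 * i) ->
  cont E (k, jstar h i k j) x -> cont E (k, j) (sgm E h i x).
Proof.
move=> Hi HE Hj HkE n1 n2.
rewrite /cont /= HkE /= /sgm /jstar /dsub.
have [Hk|Hk] := leqP h.+2 k.
- have Hs : 2 ^ (E - h.+2) = 2 ^ (E - k) * 2 ^ (k - h.+2).
    by rewrite -expnD; congr (_ ^ _); lia.
  have E1 : k.-1 - h.+1 = k - h.+2 by lia.
  have E2 : k - h - 2 = k - h.+2 by lia.
  have E3 : (h.+1 <= k.-1) = true by apply/idP; lia.
  rewrite E1 E2 E3 /= Hs divnMA.
  move: (expn_gt0' (k - h.+2)) (expn_gt0' (E - k)).
  move: (2 ^ (k - h.+2)) (2 ^ (E - k)) => P Q PP PQ.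
  clear Hs E1 E2 E3 n1 n2 HkE HE Hk.
  case: ifP => HA.
  + move/eqP: HA => HA. move/eqP => Hw.
    have Hu : x %/ Q %/ P = 4 * i - 2.
      rewrite Hw (_ : (j + P).-1 = j.-1 + 1 * P); last by lia.
      rewrite divnDMl // HA; lia.
    rewrite Hu (_ : (4 * i - 2 == 4 * i - 3) = false); last by apply/eqP; lia.
    rewrite eqxx (mulnC Q) divnBMl Hw; apply/eqP; lia.
  + case: ifP => HB.
    * move/eqP: HB => HB. move/eqP => Hw.
      have Hle : 2 * P <= j.-1.
        have := leq_divM j.-1 P. rewrite HB.
        have : 2 <= 4 * i - 2 by lia.
        move=> _ H2. apply: leq_trans H2. by rewrite leq_mul2r; apply/orP; right; lia.
      have Hu : x %/ Q %/ P = 4 * i - 3.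
        rewrite Hw (_ : (j - P).-1 = j.-1 - 1 * P); last by lia.
        rewrite divnBMl HB; lia.
      rewrite Hu eqxx (mulnC Q) divnDMl // Hw; apply/eqP; lia.
    * move/eqP => Hw. rewrite Hw.
      have -> : (j.-1 %/ P == 4 * i - 3) = false by rewrite -HA; congr (_ == _); lia.
      have -> : (j.-1 %/ P == 4 * i - 2) = false by rewrite -HB; congr (_ == _); lia.
      by rewrite Hw.
-
  have E3 : (h.+1 <= k.-1) = false by apply/negbTE; rewrite -ltnNge; lia.
  rewrite E3 /=.
  have Hs : 2 ^ (E - k) = 2 ^ (E - h.+2) * 2 ^ (h.+2 - k).
    by rewrite -expnD; congr (_ ^ _); lia.
  rewrite !Hs !divnMA.
  have key : forall a b, (a == 4 * i - 3) || (a == 4 * i - 2) ->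
                   (b == 4 * i - 3) || (b == 4 * i - 2) ->
                   a %/ 2 ^ (h.+2 - k) == j.-1 -> b %/ 2 ^ (h.+2 - k) == j.-1.
    move=> a b Ha Hb Hac.
    have [c1|c2] := leqP (h.+2 - k) 1.
    * have Ec : h.+2 - k = 1 by lia.
      move: Hac; rewrite Ec expn1 => /eqP Hac.
      have Ek : k = h.+1 by lia.
      exfalso.
      case/orP: Ha => /eqP Ha; rewrite Ha in Hac.
      - move: n1; rewrite Ek (_ : j = (2 * i).-1) ?eqxx //; lia.
      - move: n2; rewrite Ek (_ : j = (2 * i)) ?eqxx //; lia.
    * have Ec : 2 ^ (h.+2 - k) = 4 * 2 ^ (h.+2 - k - 2).
        by rewrite (_ : 4 = 2 ^ 2) // -expnD; congr (_ ^ _); lia.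
      move: Hac; rewrite Ec !divnMA.
      have -> : a %/ 4 = i.-1 by case/orP: Ha => /eqP ->; lia.
      have -> : b %/ 4 = i.-1 by case/orP: Hb => /eqP ->; lia.
      done.
  move: (expn_gt0' (E - h.+2)); move: (2 ^ (E - h.+2)) => s Ps.
  case: ifP => HA.
  + have -> : (x + s) %/ s = x %/ s + 1 by have := divnDMl 1 x Ps; rewrite mul1n.
    move/eqP: HA => HA. rewrite HA. apply: key; rewrite ?eqxx //; apply/orP; right; apply/eqP; lia.
  + case: ifP => HB //.
    have -> : (x - s) %/ s = x %/ s - 1 by have := divnBMl 1 x s; rewrite mul1n.
    move/eqP: HB => HB. rewrite HB. apply: key; rewrite ?eqxx ?orbT //; apply/orP; left; apply/eqP; lia.
Qed.

End SA.

Section SC.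

Lemma sig_divs E h i x : sgm E h i x %/ 2^(E-h.+2) =
  (let u := x %/ 2^(E-h.+2) in if u == 4*i-3 then u+1 else if u == 4*i-2 then u-1 else u).
Proof.
rewrite /sgm /=. move: (expn_gt0' (E - h.+2)); move: (2 ^ (E - h.+2)) => s Ps.
case: ifP => _; first by have := divnDMl 1 x Ps; rewrite mul1n.
case: ifP => _ //; by have := divnBMl 1 x s; rewrite mul1n.
Qed.

Lemma child_cont E h i x : 1 <= i -> h.+2 <= E ->
  cont E (h.+1,(2*i).-1) x || cont E (h.+1, 2*i) x -> cont E (h,i) (sgm E h i x).
Proof.
move=> Hi HE. rewrite /cont /=.
have -> : h.+1 <= E by lia.
have -> : h <= E by lia.
have H1 : 2 ^ (E - h.+1) = 2 ^ (E - h.+2) * 2 by rewrite mulnC -expnS; congr (_ ^ _); lia.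
have H2 : 2 ^ (E - h) = 2 ^ (E - h.+2) * 4 by rewrite (_ : 4 = 2^2) // -expnD; congr (_ ^ _); lia.
rewrite H1 H2 !divnMA sig_divs /=.
move: (x %/ 2 ^ (E - h.+2)) => u /orP [] /eqP Hu.
- case: ifP => /eqP H; [|case: ifP => /eqP H'; apply/eqP]; lia.
- case: ifP => /eqP H; [|case: ifP => /eqP H'; apply/eqP]; lia.
Qed.

End SC.

Section SD.
Local Open Scope fset_scope.

Definition cnt E (F : {fset idx}) x := #|` [fset p in F | cont E p x] |.

Lemma leq_imfset_card' (f : idx -> idx) (A : {fset idx}) : #|` f @` A| <= #|` A|.
Proof. exact: leq_imfset_card. Qed.

Lemma cnt_Phi E h i F x : h.+2 <= E -> admissible F h i ->
  (forall p, p \in F -> inD p && (p.1 <= E)%N) ->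
  (cnt E (Phi h i F) x <= cnt E F (sgm E h i x))%N.
Proof.
move=> HE Had HF.
case/and3P: (Had) => Hhi HC1 HC2.
have Hi : (1 <= i)%N by case/andP: (HF _ Hhi) => /and3P [] /=.
set f := fun p : idx => (p.1, jstar h i p.1 p.2).
set N' := [fset q in [fset (h.+1, (2 * i).-1); (h.+1, 2 * i)] | cont E q x].
set T' := [fset p in F `\` fork h i | cont E p (sgm E h i x)].
set S := [fset p in F | cont E p (sgm E h i x)].
have Hsub : [fset p in Phi h i F | cont E p x] `<=` N' `|` f @` T'.
  apply/fsubsetP => p; rewrite !inE => /andP [/orP [Hn|Hm] Hc].
    by rewrite Hn Hc.
  apply/orP; right. case/imfsetP: Hm => q /= Hq Hpq.
  rewrite Hpq in Hc *.
  apply/imfsetP; exists q => //.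
  move: Hq Hc; rewrite !inE => /andP [Hq1 Hq2] Hc.
  rewrite Hq1 Hq2 /=. clear Hpq. move: Hq1 Hq2 Hc. case: q => k j /= Hq1 Hq2 Hc.
  case/andP: (HF _ Hq2) => /and3P [/= _ Hj _] HkE.
  have n1 : (k, j) != (h.+1, (2 * i).-1).
    by apply: contraNneq Hq1 => ->; rewrite eqxx !orbT.
  have n2 : (k, j) != (h.+1, 2 * i).
    by apply: contraNneq Hq1 => ->; rewrite eqxx !orbT.
  exact: (@sig_cont E h i k j x Hi HE Hj HkE n1 n2 Hc).
have c1 : (cnt E (Phi h i F) x <= #|` N'| + #|` T'|)%N.
  apply: leq_trans (fsubset_leq_card Hsub) _.
  apply: leq_trans (leq_card_fsetU _ _) _.
  by rewrite leq_add2l leq_imfset_card'.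
apply: leq_trans c1 _.
case: (boolP (cont E (h, i) (sgm E h i x))) => Hs.
- have hN : (#|` N'| <= 1)%N.
    case: (boolP (cont E (h.+1, (2 * i).-1) x)) => H1.
    + rewrite -(cardfs1 (h.+1, (2 * i).-1)). apply: fsubset_leq_card.
      apply/fsubsetP => q; rewrite !inE => /andP [/orP [] /eqP -> Hq] //.
      move: H1 Hq; rewrite /cont /= => /andP [_ /eqP ->] /andP [_ /eqP]; lia.
    + rewrite -(cardfs1 (h.+1, 2 * i)). apply: fsubset_leq_card.
      apply/fsubsetP => q; rewrite !inE => /andP [/orP [] /eqP -> Hq] //.
      by rewrite Hq in H1.
  have hT : (#|` T'| + 1 <= #|` S|)%N.
    rewrite (cardfsD1 (h, i) S) (_ : (h, i) \in S); last by rewrite !inE Hhi Hs.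
    rewrite addnC leq_add2l. apply: fsubset_leq_card.
    apply/fsubsetP => q; rewrite !inE => /andP [/andP [Hq1 Hq2] Hq3].
    rewrite Hq2 Hq3 andbT /= andbT. by apply: contraNneq Hq1 => ->; rewrite eqxx.
  rewrite /cnt -/S. lia.
- have hN : N' = fset0.
    apply/eqP; rewrite -fsubset0; apply/fsubsetP => q; rewrite !inE => /andP [Hq Hc].
    exfalso; move/negP: Hs; apply; apply: child_cont => //.
    by case/orP: Hq => /eqP <-; rewrite Hc ?orbT.
  rewrite hN cardfs0 add0n. apply: fsubset_leq_card.
  apply/fsubsetP => q; rewrite !inE => /andP [/andP [Hq1 Hq2] Hq3].
  by rewrite Hq2 Hq3.
Qed.

End SD.

Section SE.

Lemma jstar_D h i k j : inD (h, i) -> inD (k, j) -> inD (k, jstar h i k j).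
Proof.
rewrite /inD /jstar /dsub /= => /and3P [H1 Hi Hi2] /and3P [Hk Hj Hj2].
have Ph : 2 ^ h.-1 * 2 = 2 ^ h by rewrite -expnSr; congr (_ ^ _); lia.
case: ifP => [/andP [Hhk /eqP HA]|_].
  have Hs : 2 ^ k.-1 = 2 ^ h.-1 * 4 * 2 ^ (k - h - 2).
    by rewrite (_ : 4 = 2 ^ 2) // -!expnD; congr (_ ^ _); lia.
  have E1 : k.-1 - h.+1 = k - h - 2 by lia.
  rewrite E1 in HA. rewrite Hs. move: (expn_gt0' (k - h - 2)) HA.
  move: (2 ^ (k - h - 2)) => P PP HA.
  have := ltn_ceil j.-1 PP. rewrite HA. move: (2 ^ h.-1) Hi2 => Q HQ.
  have e1 : (4 * i - 2).-1.+1 * P + 2 * P = (4 * i) * P by rewrite -mulnDl; congr (_ * _); lia.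
  have e2 : (4 * i) * P <= Q * 4 * P by rewrite leq_mul2r; apply/orP; right; lia.
  move: e1 e2; move: ((4 * i - 2).-1.+1 * P) ((4 * i) * P) (Q * 4 * P) => X Y Z.
  move=> e1 e2 e3. apply/and3P; split; lia.
case: ifP => [/andP [Hhk /eqP HB]|_]; last by rewrite Hk Hj Hj2.
have E1 : k.-1 - h.+1 = k - h - 2 by lia.
rewrite E1 in HB. move: (expn_gt0' (k - h - 2)) HB.
move: (2 ^ (k - h - 2)) => P PP HB.
have := leq_divM j.-1 P. rewrite HB.
have e1 : P <= (4 * i - 1).-1 * P by rewrite -{1}(mul1n P) leq_mul2r; apply/orP; right; lia.
move: e1; move: ((4 * i - 1).-1 * P) => X e1 e2. apply/and3P; split; lia.
Qed.

Local Open Scope fset_scope.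
Lemma Phi_D M h i F : admissible F h i -> (h < M)%N ->
  (forall p, p \in F -> inD p && (p.1 <= M)%N) ->
  forall p, p \in Phi h i F -> inD p && (p.1 <= M)%N.
Proof.
move=> /and3P [Hhi _ _] HhM HF p.
have /andP [HD _] := HF _ Hhi.
rewrite /Phi in_fsetU !inE => /orP [/orP [] /eqP -> | /imfsetP [q /= Hq ->]].
- move: HD; rewrite /inD /= => /and3P [H1 Hi Hi2].
  have Ph : 2 ^ h.-1 * 2 = 2 ^ h by rewrite -expnSr; congr (_ ^ _); lia.
  rewrite /= -Ph. move: (2 ^ h.-1) Hi2 => Q HQ. by repeat (apply/andP; split); lia.
- move: HD; rewrite /inD /= => /and3P [H1 Hi Hi2].
  have Ph : 2 ^ h.-1 * 2 = 2 ^ h by rewrite -expnSr; congr (_ ^ _); lia.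
  rewrite /= -Ph. move: (2 ^ h.-1) Hi2 => Q HQ. by repeat (apply/andP; split); lia.
- move: Hq; rewrite !inE => /andP [_ Hq].
  have /andP [HqD Hq1] := HF _ Hq.
  rewrite Hq1 andbT. case: q HqD Hq1 {Hq} => k j /= HqD _.
  exact: jstar_D.
Qed.

End SE.

Section SF.

Lemma sum_ind M h (w : nat -> nat) : h < M.+1 ->
  \sum_(k < M.+1) (nat_of_ord k == h) * w k = w h.
Proof.
move=> hM. rewrite (bigD1 (Ordinal hM)) //= eqxx mul1n big1 ?addn0 //.
move=> k Hk. rewrite (_ : (nat_of_ord k == h) = false) //. apply/negbTE.
by apply: contra Hk => /eqP Hk; apply/eqP; apply: val_inj.
Qed.

Local Open Scope fset_scope.

Definition lev (F : {fset idx}) k := #|` [fset p in F | p.1 == k] |.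
Definition pot M F := (\sum_(k < M.+1) lev F k * 3 ^ (M - k))%N.

Lemma lev_Phi F h i k : admissible F h i ->
  (lev (Phi h i F) k + (k == h) <= lev F k + 2 * (k == h.+1))%N.
Proof.
move=> /and3P [Hhi _ _].
set f := fun p : idx => (p.1, jstar h i p.1 p.2).
set N' := [fset q in [fset (h.+1, (2 * i).-1); (h.+1, 2 * i)] | q.1 == k].
set T' := [fset p in F `\` fork h i | p.1 == k].
have Hsub : [fset p in Phi h i F | p.1 == k] `<=` N' `|` f @` T'.
  apply/fsubsetP => p; rewrite !inE => /andP [/orP [Hn|Hm] Hc].
    by rewrite Hn Hc.
  apply/orP; right. case/imfsetP: Hm => q /= Hq Hpq.
  rewrite Hpq in Hc *.
  apply/imfsetP; exists q => //.
  by move: Hq Hc; rewrite !inE => /andP [Hq1 Hq2] Hc; rewrite Hq1 Hq2.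
have c1 : (lev (Phi h i F) k <= #|` N'| + #|` T'|)%N.
  apply: leq_trans (fsubset_leq_card Hsub) _.
  apply: leq_trans (leq_card_fsetU _ _) _.
  by rewrite leq_add2l leq_imfset_card.
have c2 : (#|` N'| <= 2 * (k == h.+1))%N.
  case: eqP => Hk.
    apply: (@leq_trans #|` [fset (h.+1, (2 * i).-1); (h.+1, 2 * i)]|).
      apply: fsubset_leq_card; apply/fsubsetP => q.
      by rewrite !inE => /andP [H _].
    by rewrite cardfs2 (_ : 2 * true = 2) //; case: (_ != _).
  rewrite muln0 leqn0 cardfs_eq0 -fsubset0. apply/fsubsetP => q.
  by rewrite !inE => /andP [/orP [] /eqP -> /= /eqP Hq]; exfalso; apply: Hk.
have c3 : (#|` T'| + (k == h) <= lev F k)%N.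
  case: eqP => Hk; last first.
    rewrite addn0. apply: fsubset_leq_card. apply/fsubsetP => q.
    by rewrite !inE => /andP [/andP [_ ->] ->].
  have Hm : (h, i) \in [fset p in F | p.1 == k] by rewrite !inE Hhi Hk /= eqxx.
  rewrite /lev (cardfsD1 (h, i) [fset p in F | p.1 == k]) Hm.
  rewrite addnC leq_add2l. apply: fsubset_leq_card.
  apply/fsubsetP => q; rewrite !inE => /andP [/andP [Hq1 Hq2] Hq3].
  rewrite Hq2 Hq3 /= andbT. by apply: contraNneq Hq1 => ->; rewrite eqxx.
move: c1 c2 c3. move: (lev _ k) (lev F k) (#|` N'|) (#|` T'|) (k == h) (k == h.+1).
move=> a b c d [] [] /=; lia.
Qed.

End SF.

Section SG.

Lemma pot_Phi M F h i : admissible F h i -> h < M -> pot M (Phi h i F) < pot M F.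
Proof.
move=> Had hM.
have H : \sum_(k < M.+1) (lev (Phi h i F) k + (nat_of_ord k == h)) * 3 ^ (M - k)
   <= \sum_(k < M.+1) (lev F k + 2 * (nat_of_ord k == h.+1)) * 3 ^ (M - k).
  by apply: leq_sum => k _; apply: leq_mul => //; exact: lev_Phi.
have H1 : \sum_(k < M.+1) (lev (Phi h i F) k + (nat_of_ord k == h)) * 3 ^ (M - k)
          = pot M (Phi h i F) + 3 ^ (M - h).
  by rewrite (eq_bigr _ (fun k _ => mulnDl _ _ _)) big_split /= (@sum_ind M h (fun k => 3 ^ (M - k))) //; lia.
have H2 : \sum_(k < M.+1) (lev F k + 2 * (nat_of_ord k == h.+1)) * 3 ^ (M - k)
          = pot M F + 2 * 3 ^ (M - h.+1).
  rewrite (eq_bigr _ (fun k _ => mulnDl _ _ _)) big_split /=.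
  by rewrite (eq_bigr _ (fun k _ => esym (mulnA _ _ _))) -big_distrr /= (@sum_ind M h.+1 (fun k => 3 ^ (M - k))).
have H3 : 3 ^ (M - h) = 3 * 3 ^ (M - h.+1) by rewrite -expnS; congr (_ ^ _); lia.
have H4 : 0 < 3 ^ (M - h.+1) by rewrite expn_gt0.
rewrite H1 H2 H3 in H. move: H H4.
move: (pot M (Phi h i F)) (pot M F) (3 ^ (M - h.+1)) => a b c. lia.
Qed.

End SG.

Section SH.

Lemma child_cont2 E k j c x : 1 <= j -> k.+1 <= E -> (c == (2 * j).-1) || (c == 2 * j) ->
  cont E (k.+1, c) x -> cont E (k, j) x.
Proof.
move=> Hj HE Hc. rewrite /cont /= => /andP [_ /eqP Hx].
have -> : k <= E by lia.
have H2 : 2 ^ (E - k) = 2 ^ (E - k.+1) * 2 by rewrite mulnC -expnS; congr (_ ^ _); lia.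
rewrite H2 divnMA Hx /=. apply/eqP. case/orP: Hc => /eqP ->; lia.
Qed.

Lemma cont_lo E k j : k <= E -> cont E (k, j) (j.-1 * 2 ^ (E - k)).
Proof. move=> HE; rewrite /cont /= HE mulnK ?eqxx //; exact: expn_gt0'. Qed.

Local Open Scope fset_scope.

Lemma chain E M (F : {fset idx}) :
  (M <= E)%N ->
  (forall p, p \in F -> inD p && (p.1 <= M)%N) ->
  (forall h i, (h < M)%N -> ~~ admissible F h i) ->
  forall d p, p \in F -> (M - p.1)%N = d ->
  exists x, cont E p x /\ (d < #|` [fset q in F | cont E q x && (p.1 <= q.1)%N]|)%N.
Proof.
move=> HME HF Hna. elim=> [|d IH] [k j] Hp /= Hd.
- exists (j.-1 * 2 ^ (E - k)). have /andP [_ /= HkM] := HF _ Hp.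
  have Hc : cont E (k, j) (j.-1 * 2 ^ (E - k)) by apply: cont_lo; lia.
  split=> //. rewrite cardfs_gt0. apply/fset0Pn. exists (k, j).
  by rewrite !inE Hp Hc /= leqnn.
- have /andP [/and3P [/= Hk1 Hj1 _] HkM] := HF _ Hp.
  have HkM' : (k < M)%N by lia.
  have := Hna k j HkM'. rewrite /admissible Hp /= negb_and !negbK => Hor.
  have [c [Hc Hcc]] : exists c, (k.+1, c) \in F /\ ((c == (2 * j).-1) || (c == 2 * j)).
    case/orP: Hor => H; [exists (2 * j).-1 | exists (2 * j)]; by rewrite H eqxx ?orbT.
  have [x [Hx Hcard]] := IH _ Hc (ltac:(simpl; lia)).
  exists x. have Hpx : cont E (k, j) x by apply: child_cont2 Hx => //; lia.
  split=> //.
  set S := [fset q in F | cont E q x && (k <= q.1)%N].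
  have HpS : (k, j) \in S by rewrite !inE Hp Hpx /= leqnn.
  rewrite (cardfsD1 (k, j) S) HpS add1n ltnS.
  apply: leq_trans Hcard _. apply: fsubset_leq_card. apply/fsubsetP => q.
  rewrite !inE /= => /andP [Hq /andP [Hqx Hql]].
  rewrite Hq Hqx /=. apply/andP; split; last by lia.
  by apply: contraTneq Hql => -> /=; rewrite ltnn.
Qed.

End SH.

Section SK.

Lemma scale_eq (R : realType) a k E : (1 <= k)%N -> (k <= E)%N ->
  (a%:R / 2 ^+ k.-1 * 2 ^+ E.-1 = (a * 2 ^ (E - k))%:R :> R)%R.
Proof.
move=> Hk HE.
have -> : E.-1 = (k.-1 + (E - k))%N by lia.
rewrite exprD natrM natrX mulrA mulfVK //.
by rewrite expf_neq0 // pnatr_eq0.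
Qed.

Local Open Scope ring_scope.
Lemma cont_branch (R : realType) E k j x : inD (k, j) -> (k <= E)%N -> cont E (k, j) x ->
  inBranch (x%:R / 2 ^+ E.-1 : R) (k, j).
Proof.
move=> HD HE /andP [_ /= /eqP Hx].
rewrite /inBranch HD /inDelta /=.
move: HD => /and3P [/= Hk Hj _].
have P0 : (0 < 2 ^+ E.-1 :> R)%R by rewrite exprn_gt0.
have lo : (j.-1 * 2 ^ (E - k) <= x)%N.
  by rewrite -Hx leq_divM.
have hi : (x < j * 2 ^ (E - k))%N.
  by rewrite -(prednK Hj) -Hx ltn_ceil // expn_gt0.
apply/andP; split.
- rewrite ler_pdivlMr // (_ : j%:R - 1 = (j.-1)%:R :> R); last first.
    by rewrite -{1}(prednK Hj) -natr1 addrK.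
  by rewrite scale_eq // ler_nat.
- by rewrite ltr_pdivrMr // scale_eq // ltr_nat.
Qed.

Local Open Scope fset_scope.

Lemma init_cnt (R : realType) F n E : (1 <= E)%N ->
  (forall p, p \in F -> inD p && (p.1 <= E)%N) -> is_lh R F n ->
  forall x, (cnt E F x <= n)%N.
Proof.
move=> HE HF [_ Hub] x.
case: (fset_0Vmem [fset p in F | cont E p x]) => [H0|[[k j] Hp]].
  by rewrite /cnt H0 cardfs0.
move: Hp; rewrite !inE => /andP [HpF Hc].
have /andP [HD HkE] := HF _ HpF.
have Hx : (x < 2 ^ E.-1)%N.
  move: (Hc) => /andP [_ /= /eqP Hx].
  move: HD => /and3P [/= Hk Hj Hj2].
  have := ltn_ceil x (expn_gt0' (E - k)). rewrite Hx.
  have e : E.-1 = (k.-1 + (E - k))%N by move: Hk HkE => /= Hk HkE; lia.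
  rewrite e expnD.
  move=> H; apply: leq_trans H _. rewrite leq_mul2r; apply/orP; right; lia.
set t : R := (x%:R / 2 ^+ E.-1)%R.
have Ht : (0 <= t < 1)%R.
  apply/andP; split; first by rewrite divr_ge0 // exprn_ge0.
  by rewrite ltr_pdivrMr ?exprn_gt0 // mul1r -natrX ltr_nat.
apply: leq_trans (Hub t Ht). apply: fsubset_leq_card.
apply/fsubsetP => q; rewrite !inE => /andP [Hq Hqc]. rewrite Hq /=.
have /andP [HqD HqE] := HF _ Hq.
case: q Hq Hqc HqD HqE => k' j' Hq Hqc HqD HqE.
exact: cont_branch.
Qed.

End SK.

Section SL.
Local Open Scope fset_scope.

Definition Inv M n (F : {fset idx}) :=
  (forall p, p \in F -> inD p && (p.1 <= M)%N) /\ (forall x, (cnt M.+2 F x <= n)%N).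

Lemma run M n : forall P F, (pot M F < P)%N -> Inv M n F ->
  exists (N : nat) (Fs : nat -> {fset idx}),
    [/\ Fs 0%N = F,
        (forall l, (1 <= l <= N)%N ->
           exists h i, admissible (Fs l.-1) h i /\ Fs l = Phi h i (Fs l.-1))
      & (forall p, p \in Fs N -> inDmn (M - n).+1 (M - n + n) p)].
Proof.
elim=> [|P IH] F; first by rewrite ltn0.
move=> HP [HF Hc].
have HFE : forall p, p \in F -> inD p && (p.1 <= M.+2)%N.
  move=> p /HF /andP [-> H] /=. exact: (leq_trans H (leq_trans (leqnSn _) (leqnSn _))).
case: (classic (exists h i, (h < M)%N /\ admissible F h i)).
- move=> [h [i [hM Had]]].
  have Hpot := @pot_Phi M F h i Had hM.
  have Hinv : Inv M n (Phi h i F).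
    split; first exact: (@Phi_D M h i F Had hM HF).
    move=> x. apply: leq_trans (@cnt_Phi M.+2 h i F x (ltac:(lia)) Had HFE) (Hc _).
  have [N [Fs [H0 Hs Hf]]] := IH (Phi h i F) (ltac:(lia)) Hinv.
  exists N.+1, (fun l => if l is l'.+1 then Fs l' else F).
  split=> //.
  move=> [|l] // /andP [_ Hl].
  case: l Hl => [|l] Hl /=.
    by exists h, i; rewrite H0.
  exact: (Hs l.+1 (ltac:(apply/andP; split; lia))).
- move=> Hno.
  have Hna : forall h i, (h < M)%N -> ~~ admissible F h i.
    move=> h i hM; apply/negP => Had; apply: Hno; by exists h, i.
  exists 0%N, (fun _ => F). split=> //; first by move=> l /andP [H1 H2]; exfalso; lia.
  move=> p Hp.
  have [x [_ Hx]] := @chain M.+2 M F (ltac:(lia)) HF Hna _ p Hp (erefl _).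
  have Hx2 : (M - p.1 < n)%N.
    apply: leq_trans Hx (leq_trans _ (Hc x)). apply: fsubset_leq_card.
    apply/fsubsetP => q; rewrite !inE => /andP [-> /andP [-> _]] //.
  move: (HF _ Hp). rewrite /inD /inDmn. case: p {Hp Hx} Hx2 => k j /= Hx2.
  move=> /andP [/and3P [Hk Hj Hj2] HkM]. rewrite Hj Hj2 andbT /=.
  apply/andP; split; lia.
Qed.

End SL.

Local Open Scope fset_scope.

Theorem lemma3p8 (R : realType) (F : {fset idx}) (n : nat) :
  (forall p, p \in F -> inD p) ->
  is_lh R F n ->
  exists (m N : nat) (Fs : nat -> {fset idx}),
    [/\ Fs 0%N = F,
        (forall l, (1 <= l <= N)%N ->
           exists h i, admissible (Fs l.-1) h i /\ Fs l = Phi h i (Fs l.-1))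
      & (forall p, p \in Fs N -> inDmn m.+1 (m + n) p)].
Proof.
move=> HD Hlh.
set M := (\max_(p <- F) p.1)%N.
have HM : forall p, p \in F -> (p.1 <= M)%N.
  move=> p Hp; exact: (@leq_bigmax_seq _ (enum_fset F) xpredT (fun q : idx => q.1) p Hp isT).
have HF : forall p, p \in F -> inD p && (p.1 <= M)%N.
  by move=> p Hp; rewrite HD // HM.
have HFE : forall p, p \in F -> inD p && (p.1 <= M.+2)%N.
  move=> p Hp; rewrite HD //=; exact: (leq_trans (HM p Hp) (leq_trans (leqnSn _) (leqnSn _))).
have Inv0 : Inv M n F.
  split=> //. exact: (@init_cnt R F n M.+2 (ltac:(lia)) HFE Hlh).
have [N [Fs [H0 Hs Hf]]] := @run M n (pot M F).+1 F (ltnSn _) Inv0.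
by exists (M - n)%N, N, Fs.
Qed.
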